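(* Let $J(P,Q)=\frac{D(P\|Q)+D(Q\|P)}{2}$ denote Jeffreys' divergence, with $P,Q$ ranging over pairs of probability distributions on a common countable set. Then (i) for every $\varepsilon\in[0,1)$, $\displaystyle\min_{P,Q:\ d_{\mathrm{TV}}(P,Q)=\varepsilon} J(P,Q)=\varepsilon\log\frac{1+\varepsilon}{1-\varepsilon}$, and this minimum is achieved by $P=\left(\frac{1-\varepsilon}{2},\frac{1+\varepsilon}{2}\right)$, $Q=\left(\frac{1+\varepsilon}{2},\frac{1-\varepsilon}{2}\right)$; (ii) for every $\varepsilon>0$, $\displaystyle\inf_{P,Q:\ D(P\|Q)=\varepsilon} J(P,Q)=\frac{\varepsilon}{2}$; (iii) the corresponding suprema, $\sup_{P,Q:\ d_{\mathrm{TV}}(P,Q)=\varepsilon}J(P,Q)$ for $\varepsilon\in(0,1)$ and $\sup_{P,Q:\ D(P\|Q)=\varepsilon}J(P,Q)$ for $\varepsilon>0$, are both $+\infty$.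
   Context: $d_{\mathrm{TV}}(P,Q)=\frac12\sum_x |P(x)-Q(x)|$; $D(P\|Q)=\sum_x P(x)\log\frac{P(x)}{Q(x)}$ is the relative entropy (possibly $+\infty$). Logarithms are natural. *)

(* Defs.v *)
From Stdlib Require Import Reals Lra Classical ClassicalEpsilon.
Open Scope R_scope.

Inductive ER : Type := Fin : R -> ER | PInf : ER.

Definition ER_le (x : R) (y : ER) : Prop :=
  match y with Fin b => x <= b | PInf => True end.
Definition ER_lt (x : R) (y : ER) : Prop :=
  match y with Fin b => x < b | PInf => True end.

(* Probability distributions on the countable set nat. *)
Definition is_prob (P : nat -> R) : Prop :=
  (forall x, 0 <= P x) /\ infinite_sum P 1.

(* Sum of a series over nat (in the order of nat): Some l if the partial
   sums converge to l, None otherwise. *)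
Definition series (u : nat -> R) : option R :=
  match excluded_middle_informative (exists l, infinite_sum u l) with
  | left H => Some (proj1_sig (constructive_indefinite_description _ H))
  | right _ => None
  end.

Definition dTV (P Q : nat -> R) : ER :=
  match series (fun x => Rabs (P x - Q x)) with
  | Some s => Fin (s / 2)
  | None => PInf
  end.

Definition kl_term (p q : R) : R :=
  if Req_EM_T p 0 then 0 else p * ln (p / q).

(* Relative entropy D(P||Q) (natural log), possibly +infinity:
   +infinity if P x > 0 = Q x for some x (p log(p/0) = +infinity),
   otherwise the sum of the series (+infinity if it does not converge). *)
Definition KL (P Q : nat -> R) : ER :=
  match excluded_middle_informative (exists x, 0 < P x /\ Q x = 0) with
  | left _ => PInf
  | right _ =>
      match series (fun x => kl_term (P x) (Q x)) with
      | Some l => Fin l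
      | None => PInf
      end
  end.

Definition Jeffreys (P Q : nat -> R) : ER :=
  match KL P Q, KL Q P with
  | Fin a, Fin b => Fin ((a + b) / 2)
  | _, _ => PInf
  end.

(* The two-point distributions of part (i), embedded in nat (support {0,1}). *)
Definition P_eps (eps : R) (n : nat) : R :=
  match n with 0%nat => (1 - eps) / 2 | 1%nat => (1 + eps) / 2 | _ => 0 end.
Definition Q_eps (eps : R) (n : nat) : R :=
  match n with 0%nat => (1 + eps) / 2 | 1%nat => (1 - eps) / 2 | _ => 0 end.

(* Main.v *)
Require Import Defs.
From Stdlib Require Import Reals Lra Lia Classical ClassicalEpsilon.
Open Scope R_scope.

Lemma series_some u l : series u = Some l -> infinite_sum u l.
Proof.
  unfold series. destruct (excluded_middle_informative _) as [H|H]; intro E; [|discriminate].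
  injection E as <-. exact (proj2_sig (constructive_indefinite_description _ H)).
Qed.

Lemma series_of u l : infinite_sum u l -> series u = Some l.
Proof.
  intro H. unfold series. destruct (excluded_middle_informative _) as [H'|H'].
  - f_equal. apply (uniqueness_sum u); [exact (proj2_sig (constructive_indefinite_description _ H'))|exact H].
  - exfalso; apply H'; eauto.
Qed.

Lemma isum_plus u v a b : infinite_sum u a -> infinite_sum v b ->
  infinite_sum (fun n => u n + v n) (a+b).
Proof.
  intros Hu Hv e He.
  destruct (CV_plus (sum_f_R0 u) (sum_f_R0 v) a b Hu Hv e He) as [N HN].
  exists N. intros n Hn. rewrite sum_plus. apply HN; auto.
Qed.

Lemma isum_scal u a c : infinite_sum u a -> infinite_sum (fun n => c * u n) (c*a).
Proof.
  intros Hu e He.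
  assert (Hc : Un_cv (fun _ => c) c).
  { intros e' He'. exists 0%nat. intros. unfold Rdist. rewrite Rminus_diag, Rabs_R0. lra. }
  destruct (CV_mult (fun _ => c) (sum_f_R0 u) c a Hc Hu e He) as [N HN].
  exists N. intros n Hn.
  assert (E : sum_f_R0 (fun i => c * u i) n = c * sum_f_R0 u n)
    by (rewrite scal_sum; apply sum_eq; intros; ring).
  rewrite E. apply HN; auto.
Qed.

Lemma isum_ext u v a : (forall n, u n = v n) -> infinite_sum u a -> infinite_sum v a.
Proof.
  intros E Hu e He. destruct (Hu e He) as [N HN]. exists N. intros n Hn.
  rewrite <- (sum_eq u v n); auto.
Qed.

Lemma isum_le u v a b : infinite_sum u a -> infinite_sum v b ->
  (forall n, u n <= v n) -> a <= b.
Proof.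
  intros Hu Hv H. apply (Rle_cv_lim (Un:=sum_f_R0 u) (Vn:=sum_f_R0 v)); auto.
  intro n. apply sum_Rle. intros; auto.
Qed.

Lemma fin_sum u N s : (forall n, (N < n)%nat -> u n = 0) -> sum_f_R0 u N = s ->
  infinite_sum u s.
Proof.
  intros H0 Hs e He. exists N. intros n Hn.
  assert (forall k, sum_f_R0 u (N + k) = sum_f_R0 u N).
  { induction k. - rewrite Nat.add_0_r; auto.
    - rewrite Nat.add_succ_r. simpl. rewrite IHk, H0; [ring|lia]. }
  replace n with (N + (n - N))%nat by lia. rewrite H, Hs. unfold Rdist.
  rewrite Rminus_diag, Rabs_R0. lra.
Qed.

Lemma ln_le_sub1 y : 0 < y -> ln y <= y - 1.
Proof. intro. pose proof (exp_ineq1_le (ln y)). rewrite exp_ln in H0; lra. Qed.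

Lemma ln_le' x y : 0 < x -> x <= y -> ln x <= ln y.
Proof. intros. destruct H0. - left; apply ln_increasing; auto. - subst; lra. Qed.

Lemma ln_div' x y : 0 < x -> 0 < y -> ln (x / y) = ln x - ln y.
Proof. intros. unfold Rdiv. rewrite ln_mult, ln_Rinv; try lra. apply Rinv_0_lt_compat; auto. Qed.

Lemma kl_pos p q : 0 < q -> kl_term p q = p * ln (p / q).
Proof. intro. unfold kl_term. destruct (Req_EM_T p 0); [subst; ring|auto]. Qed.

Lemma kl_ge p q : 0 <= p -> 0 <= q -> ~(0 < p /\ q = 0) -> p - q <= kl_term p q.
Proof.
  intros Hp Hq Hn. unfold kl_term. destruct (Req_EM_T p 0) as [E|E]; [lra|].
  assert (0 < p) by lra. assert (0 < q) by (destruct Hq; auto; exfalso; apply Hn; auto).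
  rewrite ln_div'; auto. pose proof (ln_le_sub1 (q/p)). rewrite ln_div' in H1; auto.
  assert (0 < q/p) by (apply Rdiv_lt_0_compat; auto). specialize (H1 H2).
  assert (p * (ln q - ln p) <= p * (q/p - 1)) by (apply Rmult_le_compat_l; lra).
  replace (p * (q/p - 1)) with (q - p) in H3 by (field; lra). nra.
Qed.

Lemma tangent p q r : 0 < p -> 0 < q -> 0 < r ->
  (ln r + 1 - / r) * p + (- ln r + 1 - r) * q <= (p - q) * ln (p / q).
Proof.
  intros Hp Hq Hr.
  set (w := ln (p / (q * r))).
  assert (Hx : 0 < p / (q*r)) by (apply Rdiv_lt_0_compat; nra).
  assert (E : ln (p/q) = w + ln r).
  { unfold w. rewrite <- ln_mult; auto. f_equal. field; lra. }
  assert (H1 : w <= p/(q*r) - 1) by (apply ln_le_sub1; auto).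
  assert (H2 : 1 - q*r/p <= w).
  { unfold w. assert (0 < q*r/p) by (apply Rdiv_lt_0_compat; nra).
    pose proof (ln_le_sub1 _ H).
    replace (p/(q*r)) with (/ (q*r/p)) by (field; lra). rewrite ln_Rinv; auto. lra. }
  assert (H3 : p * (1 - q*r/p) <= p * w) by (apply Rmult_le_compat_l; lra).
  assert (H4 : q * w <= q * (p/(q*r) - 1)) by (apply Rmult_le_compat_l; lra).
  replace (p * (1 - q*r/p)) with (p - q*r) in H3 by (field; lra).
  replace (q * (p/(q*r) - 1)) with (p / r - q) in H4 by (field; lra).
  rewrite E. unfold Rdiv in *. nra.
Qed.

Lemma KL_fin P Q a : KL P Q = Fin a ->
  (~ exists x, 0 < P x /\ Q x = 0) /\ infinite_sum (fun x => kl_term (P x) (Q x)) a.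
Proof.
  unfold KL. destruct (excluded_middle_informative _) as [_|Hn]; [discriminate|].
  destruct (series _) eqn:Es; [|discriminate]. intro E; injection E as <-.
  split; auto. apply series_some; auto.
Qed.

Lemma KL_inf P Q x : 0 < P x -> Q x = 0 -> KL P Q = PInf.
Proof.
  intros. unfold KL. destruct (excluded_middle_informative _) as [_|Hn]; auto.
  exfalso; apply Hn; eauto.
Qed.

Lemma KL_nonneg P Q b : is_prob P -> is_prob Q -> KL P Q = Fin b -> 0 <= b.
Proof.
  intros [HP0 HP1] [HQ0 HQ1] H. apply KL_fin in H as [Hn Hs].
  assert (Hd : infinite_sum (fun x => P x + (-1) * Q x) (1 + (-1)*1))
    by (apply isum_plus; auto; apply isum_scal; auto).
  replace b with (1 + (-1)*1 + b) by ring.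
  replace (1 + -1 * 1 + b) with b by ring.
  assert (1 + (-1)*1 <= b).
  { apply (isum_le _ _ _ _ Hd Hs). intro n. pose proof (kl_ge (P n) (Q n) (HP0 n) (HQ0 n)).
    assert (~ (0 < P n /\ Q n = 0)) by (intro; apply Hn; eauto). specialize (H H0). lra. }
  lra.
Qed.

Lemma dTV_fin P Q e : dTV P Q = Fin e -> infinite_sum (fun x => Rabs (P x - Q x)) (2*e).
Proof.
  unfold dTV. destruct (series _) eqn:Es; [|discriminate]. intro E; injection E as <-.
  replace (2 * (r/2)) with r by field. apply series_some; auto.
Qed.

Definition two (a b : R) (n : nat) : R := match n with 0%nat => a | 1%nat => b | _ => 0 end.
Definition three (a b c : R) (n : nat) : R :=
  match n with 0%nat => a | 1%nat => b | 2%nat => c | _ => 0 end.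

Lemma two_prob a b : 0 <= a -> 0 <= b -> a + b = 1 -> is_prob (two a b).
Proof.
  intros. split. - intros [|[|n]]; simpl; lra.
  - apply (fin_sum _ 1). + intros [|[|n]] Hn; simpl; try lia; auto. + simpl; lra.
Qed.

Lemma three_prob a b c : 0 <= a -> 0 <= b -> 0 <= c -> a + b + c = 1 -> is_prob (three a b c).
Proof.
  intros. split. - intros [|[|[|n]]]; simpl; lra.
  - apply (fin_sum _ 2). + intros [|[|[|n]]] Hn; simpl; try lia; auto. + simpl; lra.
Qed.

Lemma KL_two a b c d : 0 <= a -> 0 <= b -> 0 < c -> 0 < d ->
  KL (two a b) (two c d) = Fin (a * ln (a / c) + b * ln (b / d)).
Proof.
  intros. unfold KL. destruct (excluded_middle_informative _) as [[x [H3 H4]]|_].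
  - exfalso. destruct x as [|[|x]]; simpl in *; lra.
  - rewrite (series_of _ (a * ln (a / c) + b * ln (b / d))); auto.
    apply (fin_sum _ 1).
    + intros [|[|n]] Hn; simpl; try lia. unfold kl_term. destruct (Req_EM_T 0 0); lra.
    + simpl. rewrite !kl_pos; auto.
Qed.

Lemma pair_bound eps p q : 0 <= eps < 1 -> 0 < p -> 0 < q ->
  (ln ((1+eps)/(1-eps)) + 2*eps/(1-eps^2)) * Rabs (p - q) + (-2*eps^2/(1-eps^2)) * (p+q)
  <= kl_term p q + kl_term q p.
Proof.
  intros He Hp Hq. rewrite !kl_pos; auto.
  set (L := ln ((1+eps)/(1-eps))).
  assert (Eq : q * ln (q/p) = - q * ln (p/q)).
  { replace (q/p) with (/(p/q)) by (field; lra). rewrite ln_Rinv; [ring|].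
    apply Rdiv_lt_0_compat; auto. }
  rewrite Eq.
  assert (Hr : 0 < (1+eps)/(1-eps)) by (apply Rdiv_lt_0_compat; lra).
  assert (H1e : 1 - eps^2 <> 0) by nra.
  destruct (Rle_or_lt q p).
  - rewrite Rabs_right by lra.
    pose proof (tangent p q ((1+eps)/(1-eps)) Hp Hq Hr). fold L in H0.
    assert (E : (L + 1 - / ((1 + eps) / (1 - eps))) * p + (- L + 1 - (1 + eps) / (1 - eps)) * q
       = (L + 2*eps/(1-eps^2)) * (p - q) + (-2*eps^2/(1-eps^2)) * (p+q)) by (field; lra).
    lra.
  - rewrite Rabs_left by lra.
    assert (Hr' : 0 < (1-eps)/(1+eps)) by (apply Rdiv_lt_0_compat; lra).
    pose proof (tangent p q ((1-eps)/(1+eps)) Hp Hq Hr').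
    assert (EL : ln ((1-eps)/(1+eps)) = - L).
    { unfold L. rewrite <- ln_Rinv; auto. f_equal. field; lra. }
    rewrite EL in H0.
    assert (E : (- L + 1 - / ((1 - eps) / (1 + eps))) * p + (- - L + 1 - (1 - eps) / (1 + eps)) * q
       = (L + 2*eps/(1-eps^2)) * (- (p - q)) + (-2*eps^2/(1-eps^2)) * (p+q)) by (field; lra).
    lra.
Qed.

Lemma part_i_lower eps : 0 <= eps < 1 -> forall P Q : nat -> R, is_prob P -> is_prob Q -> dTV P Q = Fin eps ->
        ER_le (eps * ln ((1 + eps) / (1 - eps))) (Jeffreys P Q).
Proof.
  intros He P Q [HP0 HP1] [HQ0 HQ1] Hd. apply dTV_fin in Hd.
  unfold Jeffreys. destruct (KL P Q) as [a|] eqn:E1; [|exact I].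
  destruct (KL Q P) as [b|] eqn:E2; [|exact I]. simpl.
  apply KL_fin in E1 as [N1 S1]. apply KL_fin in E2 as [N2 S2].
  set (L := ln ((1+eps)/(1-eps))).
  set (lam := L + 2*eps/(1-eps^2)). set (mu := -2*eps^2/(1-eps^2)).
  assert (Hl : infinite_sum (fun x => lam * Rabs (P x - Q x) + mu * (P x + Q x))
                 (lam * (2*eps) + mu * (1 + 1))).
  { apply isum_plus; apply isum_scal; auto. apply isum_plus; auto. }
  assert (Hr : infinite_sum (fun x => kl_term (P x) (Q x) + kl_term (Q x) (P x)) (a + b))
    by (apply isum_plus; auto).
  assert (Hle : lam * (2*eps) + mu * (1+1) <= a + b).
  { apply (isum_le _ _ _ _ Hl Hr). intro x.
    destruct (HP0 x) as [Hp|Hp].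
    - assert (0 < Q x). { destruct (HQ0 x); auto. exfalso; apply N1; eauto. }
      apply pair_bound; auto.
    - assert (Q x = 0). { destruct (HQ0 x); auto. exfalso; apply N2; eauto. }
      rewrite <- Hp, H. unfold kl_term. destruct (Req_EM_T 0 0); [|lra].
      rewrite Rminus_diag, Rabs_R0. lra. }
  assert (H1e : 1 - eps^2 <> 0) by nra.
  assert (E : lam * (2*eps) + mu * (1+1) = 2 * (eps * L)) by (unfold lam, mu; field; auto).
  lra.
Qed.

Lemma part_i_attain eps : 0 <= eps < 1 ->
     (is_prob (P_eps eps) /\ is_prob (Q_eps eps) /\
      dTV (P_eps eps) (Q_eps eps) = Fin eps /\
      Jeffreys (P_eps eps) (Q_eps eps) = Fin (eps * ln ((1 + eps) / (1 - eps)))).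
Proof.
  intros He.
  change (P_eps eps) with (two ((1-eps)/2) ((1+eps)/2)).
  change (Q_eps eps) with (two ((1+eps)/2) ((1-eps)/2)).
  split; [apply two_prob; lra|]. split; [apply two_prob; lra|]. split.
  - unfold dTV. rewrite (series_of _ (2*eps)); [f_equal; field|].
    apply (fin_sum _ 1).
    + intros [|[|n]] Hn; simpl; try lia. rewrite Rminus_diag; apply Rabs_R0.
    + simpl. replace ((1 - eps) / 2 - (1 + eps) / 2) with (-eps) by field.
      replace ((1 + eps) / 2 - (1 - eps) / 2) with eps by field.
      rewrite Rabs_Ropp, Rabs_right; lra.
  - unfold Jeffreys. rewrite !KL_two by lra.
    set (L := ln ((1+eps)/(1-eps))).
    assert (E1 : ln (((1+eps)/2) / ((1-eps)/2)) = L) by (unfold L; f_equal; field; lra).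
    assert (E2 : ln (((1-eps)/2) / ((1+eps)/2)) = - L).
    { unfold L. rewrite <- ln_Rinv by (apply Rdiv_lt_0_compat; lra). f_equal; field; lra. }
    rewrite E1, E2. f_equal. field.
Qed.

Lemma part_ii_lower eps : 0 < eps ->
  forall P Q : nat -> R, is_prob P -> is_prob Q -> KL P Q = Fin eps ->
        ER_le (eps / 2) (Jeffreys P Q).
Proof.
  intros He P Q HP HQ H. unfold Jeffreys. rewrite H.
  destruct (KL Q P) as [b|] eqn:E; [|exact I]. simpl.
  pose proof (KL_nonneg Q P b HQ HP E). lra.
Qed.

Lemma part_iii_a eps : 0 < eps < 1 -> forall M : R,
     exists P Q : nat -> R, is_prob P /\ is_prob Q /\ dTV P Q = Fin eps /\
       ER_lt M (Jeffreys P Q).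
Proof.
  intros He M. exists (three (1-eps) eps 0), (three (1-eps) 0 eps).
  split; [apply three_prob; lra|]. split; [apply three_prob; lra|]. split.
  - unfold dTV. rewrite (series_of _ (2*eps)); [f_equal; field|].
    apply (fin_sum _ 2).
    + intros [|[|[|n]]] Hn; simpl; try lia. rewrite Rminus_diag; apply Rabs_R0.
    + simpl. rewrite Rminus_diag, Rabs_R0.
      replace (eps - 0) with eps by ring. replace (0 - eps) with (-eps) by ring.
      rewrite Rabs_Ropp, Rabs_right; lra.
  - unfold Jeffreys. rewrite (KL_inf _ _ 1%nat); simpl; auto; lra.
Qed.

Lemma part_iii_b eps : 0 < eps -> forall M : R,
     exists P Q : nat -> R, is_prob P /\ is_prob Q /\ KL P Q = Fin eps /\
       ER_lt M (Jeffreys P Q).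
Proof.
  intros He M.
  assert (H1 : exp (- eps) < 1) by (rewrite <- exp_0; apply exp_increasing; lra).
  pose proof (exp_pos (- eps)).
  exists (two 1 0), (two (exp (-eps)) (1 - exp (-eps))).
  split; [apply two_prob; lra|]. split; [apply two_prob; lra|]. split.
  - rewrite KL_two by lra. f_equal.
    replace (1 / exp (- eps)) with (/ exp (-eps)) by (field; lra).
    rewrite ln_Rinv, ln_exp by auto. ring.
  - unfold Jeffreys. destruct (KL (two 1 0) _); [|exact I].
    rewrite (KL_inf (two (exp (-eps)) (1 - exp (-eps))) (two 1 0) 1%nat); simpl; auto; lra.
Qed.

Lemma part_ii_upper eps : 0 < eps -> forall delta : R, 0 < delta ->
        exists P Q : nat -> R, is_prob P /\ is_prob Q /\ KL P Q = Fin eps /\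
          exists j : R, Jeffreys P Q = Fin j /\ j < eps / 2 + delta.
Proof.
  intros He delta Hd.
  set (a := 1 - exp (- delta)).
  assert (Hed : exp (- delta) < 1) by (rewrite <- exp_0; apply exp_increasing; lra).
  pose proof (exp_pos (- delta)).
  assert (Ha0 : 0 < a) by (unfold a; lra). assert (Ha1 : a < 1) by (unfold a; lra).
  assert (Hla : ln (1 - a) = - delta) by (unfold a; replace (1 - (1 - exp (- delta))) with (exp (-delta)) by ring; apply ln_exp).
  set (K := (eps + 1 + (1-a)*delta)/a).
  assert (HK : 0 < K) by (unfold K; apply Rdiv_lt_0_compat; nra).
  set (G := fun k => (1-a) * ln ((1-a)/(1 - a * exp (- k))) + a * k).
  assert (Hpos : forall k, 0 <= k -> 0 < 1 - a * exp (-k) <= 1).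
  { intros k Hk. assert (exp (-k) <= 1) by (rewrite <- exp_0; destruct Hk;
      [left; apply exp_increasing; lra| subst; rewrite Ropp_0; lra]).
    pose proof (exp_pos (-k)). split; nra. }
  destruct (Ranalysis5.IVT_interv (fun k => G k - eps) 0 K) as [k [Hk HGk]].
  - intros x Hx. unfold G. destruct (Hpos x) as [Hp1 Hp2]; [lra|]. reg.
    + lra.
    + apply derivable_continuous_pt. exists (/ ((1 - a) / (1 - a * exp (- x)))).
      apply derivable_pt_lim_ln. apply Rdiv_lt_0_compat; lra.
  - auto.
  - unfold G. rewrite Ropp_0, exp_0. replace ((1-a)/(1-a*1)) with 1 by (field; lra).
    rewrite ln_1. lra.
  - unfold G. destruct (Hpos K) as [Hp1 Hp2]; [lra|].
    assert (ln (1-a) <= ln ((1-a)/(1-a*exp(-K)))).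
    { apply ln_le'; [lra|]. apply (Rmult_le_reg_r (1 - a * exp (-K))); auto.
      unfold Rdiv. rewrite Rmult_assoc, Rinv_l by lra. nra. }
    assert (a * K = eps + 1 + (1-a)*delta) by (unfold K; field; lra).
    rewrite Hla in H0. nra.
  - set (b := a * exp (-k)).
    assert (Hek : 0 < exp (-k) <= 1).
    { split; [apply exp_pos|]. rewrite <- exp_0. destruct (proj1 Hk);
      [left; apply exp_increasing; lra| subst; rewrite Ropp_0; lra]. }
    assert (Hb0 : 0 < b) by (unfold b; nra). assert (Hba : b <= a) by (unfold b; nra).
    exists (two (1-a) a), (two (1-b) b).
    split; [apply two_prob; lra|]. split; [apply two_prob; lra|].
    assert (Hab : ln (a / b) = k).
    { unfold b. replace (a / (a * exp (-k))) with (/ exp (-k)) by (field; lra).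
      rewrite ln_Rinv, ln_exp by lra. ring. }
    split.
    + rewrite KL_two by lra. f_equal. rewrite Hab. unfold G in HGk. unfold b in *. lra.
    + unfold Jeffreys. rewrite !KL_two by lra.
      eexists; split; [reflexivity|].
      assert (Hba' : ln (b / a) = - k).
      { replace (b/a) with (/(a/b)) by (field; lra). rewrite ln_Rinv, Hab; [ring|].
        apply Rdiv_lt_0_compat; lra. }
      assert (Hl1 : 0 <= ln ((1-b)/(1-a))).
      { rewrite <- ln_1. apply ln_le'; [lra|]. apply (Rmult_le_reg_r (1-a)); [lra|].
        unfold Rdiv. rewrite Rmult_assoc, Rinv_l by lra. lra. }
      assert (Hl2 : ln ((1-b)/(1-a)) <= delta).
      { replace delta with (- ln (1-a)) by lra. replace (- ln (1-a)) with (ln (/(1-a))).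
        - apply ln_le'. apply Rdiv_lt_0_compat; lra.
          unfold Rdiv. assert (0 < /(1-a)) by (apply Rinv_0_lt_compat; lra). nra.
        - apply ln_Rinv; lra. }
      assert ((1-b) * ln ((1-b)/(1-a)) <= ln ((1-b)/(1-a))) by nra.
      rewrite Hba', Hab. unfold G in HGk. fold b in HGk. nra.
Qed.

Theorem proposition4 :
  (* (i) *)
  (forall eps : R, 0 <= eps < 1 ->
     (forall P Q : nat -> R, is_prob P -> is_prob Q -> dTV P Q = Fin eps ->
        ER_le (eps * ln ((1 + eps) / (1 - eps))) (Jeffreys P Q)) /\
     (is_prob (P_eps eps) /\ is_prob (Q_eps eps) /\
      dTV (P_eps eps) (Q_eps eps) = Fin eps /\
      Jeffreys (P_eps eps) (Q_eps eps) = Fin (eps * ln ((1 + eps) / (1 - eps))))) /\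
  (* (ii) *)
  (forall eps : R, 0 < eps ->
     (forall P Q : nat -> R, is_prob P -> is_prob Q -> KL P Q = Fin eps ->
        ER_le (eps / 2) (Jeffreys P Q)) /\
     (forall delta : R, 0 < delta ->
        exists P Q : nat -> R, is_prob P /\ is_prob Q /\ KL P Q = Fin eps /\
          exists j : R, Jeffreys P Q = Fin j /\ j < eps / 2 + delta)) /\
  (* (iii) *)
  (forall eps : R, 0 < eps < 1 -> forall M : R,
     exists P Q : nat -> R, is_prob P /\ is_prob Q /\ dTV P Q = Fin eps /\
       ER_lt M (Jeffreys P Q)) /\
  (forall eps : R, 0 < eps -> forall M : R,
     exists P Q : nat -> R, is_prob P /\ is_prob Q /\ KL P Q = Fin eps /\
       ER_lt M (Jeffreys P Q)).
Proof.
  split; [intros eps He; split; [apply part_i_lower|apply part_i_attain]; auto|].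
  split; [intros eps He; split; [apply part_ii_lower|apply part_ii_upper]; auto|].
  split; [apply part_iii_a|apply part_iii_b].
Qed.
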